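(* A finite relational structure $\mathcal H$ is strongly $2$-rectangular if and only if it is strongly $2$-balanced.
   Context: For a prime $p$, a relation is $p$-mpp-definable in $\mathcal H$ if it is defined by a formula of the form $\exists^{\equiv p}\mathbf y_1\exists^{\equiv p}\mathbf y_2\cdots\exists^{\equiv p}\mathbf y_s\,\Phi$, where $\Phi$ is a conjunction of atomic formulas using relations of $\mathcal H$ and equality, the $\mathbf y_j$ are (groups of) variables, and $\exists^{\equiv p}\mathbf y\,\Psi(\mathbf x,\mathbf y)$ holds for $\mathbf a$ iff the number of $\mathbf b$ with $\Psi(\mathbf a,\mathbf b)$ true is not divisible by $p$. $\langle\mathcal H\rangle_p$ is the set of all relations $p$-mpp-definable in $\mathcal H$. A binary relation $\mathcal R\subseteq A_1\times A_2$ is rectangular if $(a,c),(a,d),(b,c)\in\mathcal R$ implies $(b,d)\in\mathcal R$. An $n$-ary relation $\mathcal R$ ($n\ge2$) is rectangular if for every nonempty $I\subsetneq[n]$, $\mathcal R$ viewed as a binary relation between $\mathrm{pr}_I\mathcal R$ and $\mathrm{pr}_{[n]\setminus I}\mathcal R$ is rectangular. $\mathcal H$ is strongly $p$-rectangular if every relation in $\langle\mathcal H\rangle_p$ of arity at least 2 is rectangular. A matrix is a rank-1 block matrix if after permuting rows and columns it is block-diagonal (blocks not necessarily square) with every nonzero block of rank at most 1. A ternary relation $\mathcal R\subseteq A_1\times A_2\times A_3$ is $p$-balanced if the matrix $M_{\mathcal R}\in\mathbb Z_p^{A_1\times A_2}$, $M_{\mathcal R}[x,y]=|\{z:(x,y,z)\in\mathcal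 R\}|\bmod p$, is a rank-1 block matrix over $\mathbb Z_p$; a relation of higher arity $n$ is $p$-balanced if every representation of it as a ternary relation $\subseteq H^k\times H^\ell\times H^{n-k-\ell}$ (grouping coordinates) is $p$-balanced. $\mathcal H$ is strongly $p$-balanced if every relation in $\langle\mathcal H\rangle_p$ is $p$-balanced. *)

(* Defs.v *)
From HB Require Import structures.
From Stdlib Require List.
From mathcomp Require Import all_boot all_order all_algebra.
Set Implicit Arguments. Unset Strict Implicit. Unset Printing Implicit Defensive.
Import GRing.Theory.
Local Open Scope ring_scope.

Section RelStruct.
Variable H : finType.

Definition structure := seq {n : nat & {set {ffun 'I_n -> H}}}.

Inductive atom (k : nat) : Type :=
  | RelAt (r : nat) (R : {set {ffun 'I_r -> H}}) (v : 'I_r -> 'I_k)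
  | EqAt (i j : 'I_k).

(* p-mpp formulas with k free variables:
   either a conjunction of atoms, or  exists^{=p} y Psi  where y is a group
   of m fresh variables (the last m variables of Psi's k+m variables). *)
Inductive mpp : nat -> Type :=
  | QF k : seq (atom k) -> mpp k
  | ExP k m : mpp (k + m) -> mpp k.

Definition join k m (a : 'I_k -> H) (b : 'I_m -> H) : 'I_(k + m) -> H :=
  fun i => match split i with inl j => a j | inr j => b j end.

Definition atom_eval k (t : atom k) (a : 'I_k -> H) : bool :=
  match t with
  | RelAt r R v => [ffun i => a (v i)] \in R
  | EqAt i j => a i == a j
  end.

Fixpoint mpp_eval (p : nat) k (phi : mpp k) : ('I_k -> H) -> bool :=
  match phi with
  | QF k l => fun a => all (fun t => atom_eval t a) l
  | ExP k m phi' => fun a =>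
      (#|[pred b : {ffun 'I_m -> H} | mpp_eval p phi' (join a b)]| %% p != 0%N)%N
  end.

Definition atom_ok (S : structure) k (t : atom k) : Prop :=
  match t with
  | RelAt r R v => List.In (existT _ r R) S
  | EqAt _ _ => True
  end.

Fixpoint mpp_ok (S : structure) k (phi : mpp k) : Prop :=
  match phi with
  | QF k l => forall t, List.In t l -> atom_ok S t
  | ExP k m phi' => mpp_ok S phi'
  end.

Definition mpp_definable (p : nat) (S : structure) n
    (R : {set {ffun 'I_n -> H}}) : Prop :=
  exists phi : mpp n, mpp_ok S phi /\
    forall a : {ffun 'I_n -> H}, (a \in R) = mpp_eval p phi a.

Definition rect2 (A B : Type) (R : A -> B -> bool) : Prop :=
  forall a b c d, R a c -> R a d -> R b c -> R b d.

Definition mix n (I : {set 'I_n}) (u w : {ffun 'I_n -> H}) : {ffun 'I_n -> H} :=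
  [ffun i => if i \in I then u i else w i].

(* R viewed as a binary relation between its I-part and its ([n]\I)-part:
   (u, w) is related iff the tuple formed from u|_I and w|_([n]\I) is in R. *)
Definition rectangular n (R : {set {ffun 'I_n -> H}}) : Prop :=
  forall I : {set 'I_n}, I != set0 -> I != setT ->
    rect2 (fun u w : {ffun 'I_n -> H} => mix I u w \in R).

Definition strongly_rectangular (p : nat) (S : structure) : Prop :=
  forall n (R : {set {ffun 'I_n -> H}}),
    mpp_definable p S R -> (1 < n)%N -> rectangular R.

(* Rank-1 block matrix: rows and columns can be distributed into s blocks
   (i.e. after permuting, the matrix is block diagonal) with all nonzero
   entries inside blocks, and every block of rank at most 1. *)
Definition rank1_block (F : fieldType) m n (M : 'M[F]_(m, n)) : Prop :=
  exists s (r : 'I_m -> 'I_s) (c : 'I_n -> 'I_s),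
    (forall i j, M i j != 0 -> r i = c j) /\
    forall b : 'I_s,
      (\rank (\matrix_(i, j) (if (r i == b) && (c j == b) then M i j else 0%R)) <= 1)%N.

Definition tri_tuple k l m n (e : (k + l + m)%N = n) (x : {ffun 'I_k -> H})
    (y : {ffun 'I_l -> H}) (z : {ffun 'I_m -> H}) : {ffun 'I_n -> H} :=
  [ffun i : 'I_n => join (join x y) z (cast_ord (esym e) i)].

Definition balance_matrix (p : nat) k l m n (e : (k + l + m)%N = n)
    (R : {set {ffun 'I_n -> H}}) :
    'M['F_p]_(#|{ffun 'I_k -> H}|, #|{ffun 'I_l -> H}|) :=
  \matrix_(i, j)
    (#|[pred z : {ffun 'I_m -> H} |
        tri_tuple e (enum_val i) (enum_val j) z \in R]|)%:R.

Definition balanced (p : nat) n (R : {set {ffun 'I_n -> H}}) : Prop :=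
  forall k l m (e : (k + l + m)%N = n), rank1_block (balance_matrix p e R).

Definition strongly_balanced (p : nat) (S : structure) : Prop :=
  forall n (R : {set {ffun 'I_n -> H}}), mpp_definable p S R -> balanced p R.

End RelStruct.

(* Main.v *)
Require Import Defs.
From mathcomp Require Import all_boot all_order all_algebra.
From Stdlib Require Import FunctionalExtensionality.
Set Implicit Arguments. Unset Strict Implicit. Unset Printing Implicit Defensive.
Import GRing.Theory.
Local Open Scope ring_scope.

Lemma F2_one (x : 'F_2) : x != 0 -> x = 1.
Proof. move: x => [[|[|k]] Hk] //=. by move=> _; apply: val_inj. Qed.

Lemma ffun_fun (aT : finType) (rT : Type) (f : aT -> rT) : (finfun f : aT -> rT) = f.
Proof. by apply: functional_extensionality => i; rewrite ffunE. Qed.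

Section Gen.
Variable H : finType.

Lemma join_l k m (a : 'I_k -> H) (b : 'I_m -> H) i : join a b (lshift m i) = a i.
Proof. by rewrite /join; change (lshift m i) with (@unsplit k m (inl i)); rewrite unsplitK. Qed.

Lemma join_r k m (a : 'I_k -> H) (b : 'I_m -> H) i : join a b (rshift k i) = b i.
Proof. by rewrite /join; change (rshift k i) with (@unsplit k m (inr i)); rewrite unsplitK. Qed.

Definition ren_atom k k' (s : 'I_k -> 'I_k') (t : atom H k) : atom H k' :=
  match t with
  | RelAt r R v => RelAt R (fun i => s (v i))
  | EqAt i j => EqAt H (s i) (s j)
  end.

Definition liftS k k' m (s : 'I_k -> 'I_k') (i : 'I_(k + m)) : 'I_(k' + m) :=
  match split i with inl j => lshift m (s j) | inr j => rshift k' j end.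

Lemma join_lift k k' m (s : 'I_k -> 'I_k') (a : 'I_k' -> H) (b : 'I_m -> H) :
  (fun i => join a b (liftS s i)) = join (fun i => a (s i)) b.
Proof.
apply: functional_extensionality => i; rewrite /liftS [RHS]/join.
case: (split i) => j; by [rewrite join_l | rewrite join_r].
Qed.

Lemma rename_mpp (p : nat) (S : structure H) k (phi : mpp H k) :
  forall k' (s : 'I_k -> 'I_k'), mpp_ok S phi ->
  exists phi' : mpp H k', mpp_ok S phi' /\
    forall a, mpp_eval p phi' a = mpp_eval p phi (fun i => a (s i)).
Proof.
elim: phi => {k} [k l | k m phi IH] k' s ok.
- exists (QF (map (ren_atom s) l)); split.
    move=> t /List.in_map_iff [t0 [<- Ht0]].
    by case: t0 Ht0 => [r R v|i j] Ht0 //=; apply: (ok _ Ht0).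
  move=> a /=; rewrite all_map; apply: eq_all => t.
  by case: t.
- have [phi' [ok' Hev]] := IH (k' + m)%N (liftS s) ok.
  exists (ExP phi'); split => //= a.
  congr (_ %% _ != _)%N; apply: eq_card => b; rewrite !inE.
  by rewrite Hev join_lift.
Qed.

End Gen.

Section Mat.
Variable F : fieldType.

Lemma small_rows m n (M : 'M[F]_(m, n)) : (m <= 1)%N -> rank1_block M.
Proof.
move=> Hm; exists 1%N, (fun _ => ord0), (fun _ => ord0); split => // b.
exact: leq_trans (rank_leq_row _) Hm.
Qed.

Lemma small_cols m n (M : 'M[F]_(m, n)) : (n <= 1)%N -> rank1_block M.
Proof.
move=> Hm; exists 1%N, (fun _ => ord0), (fun _ => ord0); split => // b.
exact: leq_trans (rank_leq_col _) Hm.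
Qed.

Lemma rank1_rect m n (M : 'M[F]_(m, n)) : rank1_block M ->
  forall i i' j j', M i j != 0 -> M i j' != 0 -> M i' j != 0 -> M i' j' != 0.
Proof.
move=> [s [r [c [Hrc Hrk]]]] i i' j j' H1 H2 H3.
have E1 := Hrc _ _ H1; have E2 := Hrc _ _ H2; have E3 := Hrc _ _ H3.
set b := r i.
set N := \matrix_(i, j) (if (r i == b) && (c j == b) then M i j else 0).
have Nin : forall x y, r x = b -> c y = b -> N x y = M x y.
  by move=> x y Hx Hy; rewrite /N mxE Hx Hy eqxx.
have Hrow : row i N != 0.
  apply/eqP => /matrixP /(_ ord0 j); rewrite !mxE -/b -E1 eqxx /=.
  by move/eqP; rewrite (negbTE H1).
have Hsub : (N <= row i N)%MS.
  have := mxrank_leqif_sup (row_sub i N).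
  move=> [Hle <-]; move: Hle; rewrite rank_rV Hrow => Hle.
  by rewrite eqn_leq Hle (Hrk b).
have /sub_rVP [a Ha] : (row i' N <= row i N)%MS := submx_trans (row_sub i' N) Hsub.
have Hj := congr1 (fun v : 'rV_n => v ord0 j) Ha.
have Hj' := congr1 (fun v : 'rV_n => v ord0 j') Ha.
have ri' : (r i' == b) by rewrite /b E3 E1.
have ri : (r i == b) by [].
have cj : (c j == b) by rewrite /b E1.
have cj' : (c j' == b) by rewrite /b E2.
move: Hj Hj' => /=; rewrite !mxE ri ri' cj cj' /= => Hj Hj'.
rewrite Hj' mulf_neq0 //; apply: contraNneq H3 => a0; by rewrite Hj a0 mul0r.
Qed.


Lemma rect_rank1 m n (M : 'M[F]_(m, n)) :
  (forall i j, M i j != 0 -> M i j = 1) ->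
  (forall i i' j j', M i j != 0 -> M i j' != 0 -> M i' j != 0 -> M i' j' != 0) ->
  rank1_block M.
Proof.
move=> Hone Hrect.
pose f (i : 'I_m) : 'I_n.+1 :=
  if [pick j | M i j != 0] is Some j then widen_ord (leqnSn n) j else ord_max.
pose g (j : 'I_n) : 'I_n.+1 :=
  if [pick i | M i j != 0] is Some i then f i else ord_max.
have same : forall i i' j, M i j != 0 -> M i' j != 0 -> f i = f i'.
  move=> i i' j Hi Hi'; rewrite /f (@eq_pick _ (fun j' => M i j' != 0) (fun j' => M i' j' != 0)) //.
  move=> j' /=; apply/idP/idP => Hj'.
  - exact: Hrect Hi Hj' Hi'.
  - exact: Hrect Hi' Hj' Hi.
have rowpick : forall i j, M i j != 0 -> exists2 j0, f i = widen_ord (leqnSn n) j0 & M i j0 != 0.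
  move=> i j Hij; rewrite /f; case: pickP => [j0 Hj0|Hn]; first by exists j0.
  by move: (Hn j) => /= Hnj; rewrite Hnj in Hij.
exists n.+1, f, g; split.
  move=> i j Hij; rewrite /g; case: pickP => [i0 Hi0|Hn]; first exact: same Hij Hi0.
  by move: (Hn i) => /= Hni; rewrite Hni in Hij.
move=> b.
pose u : 'cV[F]_m := \col_i (if (f i == b) && [exists j, M i j != 0] then 1 else 0).
pose v : 'rV[F]_n := \row_j (if (g j == b) && [exists i, M i j != 0] then 1 else 0).
have claimB : forall i j, f i = b -> g j = b -> [exists j, M i j != 0] ->
    [exists i, M i j != 0] -> M i j != 0.
  move=> i j fi gj /existsP [j1 Hj1] /existsP [i1 Hi1].
  move: gj; rewrite /g; case: pickP => [i0 Hi0|Hn]; last by move: (Hn i1) => /=; rewrite Hi1.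
  move=> gj.
  have [j2 fi2 Hj2] := rowpick _ _ Hj1.
  have [j3 fi3 Hj3] := rowpick _ _ Hi0.
  have e23 : j2 = j3.
    apply: val_inj; have := congr1 val (etrans fi (esym gj)).
    by rewrite fi2 fi3.
  subst j3; exact: Hrect Hj3 Hi0 Hj2.
have -> : \matrix_(i, j) (if (f i == b) && (g j == b) then M i j else 0) = u *m v.
  apply/matrixP => i j; rewrite !mxE big_ord1 !mxE.
  case: (f i =P b) => fi /=; last by rewrite mul0r.
  case: (g j =P b) => gj /=; last by rewrite mulr0.
  have [Hij|Hij] := boolP (M i j != 0).
    have -> : [exists j0, M i j0 != 0] by apply/existsP; exists j.
    have -> : [exists i0, M i0 j != 0] by apply/existsP; exists i.
    by rewrite mulr1 Hone.
  move/negPn/eqP: Hij => Hij; rewrite Hij.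
  case: (boolP [exists j0, M i j0 != 0]) => Hr; last by rewrite mul0r.
  case: (boolP [exists i0, M i0 j != 0]) => Hc; last by rewrite mulr0.
  by have := claimB _ _ fi gj Hr Hc; rewrite Hij eqxx.
exact: leq_trans (mxrankM_maxr _ _) (rank_leq_row _).
Qed.

End Mat.

Lemma mix_join (H : finType) k l (I : {set 'I_(k + l)}) (x x2 : 'I_k -> H) (y y2 : 'I_l -> H) :
  I = [set t : 'I_(k + l) | (t < k)%N] ->
  mix I (finfun (join x y)) (finfun (join x2 y2)) = finfun (join x y2).
Proof.
move=> ->; apply/ffunP => t; rewrite !ffunE inE /join.
by case: splitP.
Qed.

Theorem lemma6p3 (H : finType) (S : structure H) :
  strongly_rectangular 2 S <-> strongly_balanced 2 S.
Proof.
split.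
- move=> Hrect n R [phi [ok Hdef]] k l m e.
  case: n / e in R phi ok Hdef *.
  case: (posnP k) => [k0|kpos].
    subst k; apply: small_rows; by rewrite card_ffun card_ord expn0.
  case: (posnP l) => [l0|lpos].
    subst l; apply: small_cols; by rewrite card_ffun card_ord expn0.
  pose Q (f : 'I_(k + l) -> H) := mpp_eval 2 (ExP (m:=m) phi) f.
  have entry : forall i j, (balance_matrix 2 (erefl (k + l + m)%N) R i j != 0)
      = Q (join (enum_val i) (enum_val j)).
    move=> i j; rewrite mxE -(dvdn_pcharf (pchar_Fp (isT : prime 2))) /Q /= /dvdn.
    congr (_ %% _ != _)%N; apply: eq_card => z; rewrite !inE Hdef.
    congr (mpp_eval _ _ _); apply: functional_extensionality => t.
    by rewrite /tri_tuple ffunE cast_ord_id.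
  apply: rect_rank1 => [i j /F2_one //|i i' j j'].
  rewrite !entry => h1 h2 h3.
  pose R' := [set a : {ffun 'I_(k + l) -> H} | Q a].
  have defR' : mpp_definable 2 S R'.
    by exists (ExP (m:=m) phi); split => // a; rewrite inE.
  have n2 : (1 < k + l)%N by rewrite -(addn1 1) leq_add.
  pose I := [set t : 'I_(k + l) | (t < k)%N].
  have kl : (k < k + l)%N by rewrite -{1}(addn0 k) ltn_add2l.
  have I0 : I != set0.
    by apply/set0Pn; exists (Ordinal (ltn_addr l kpos)); rewrite inE.
  have IT : I != setT.
    apply/negP => /eqP HI.
    have : Ordinal kl \in I by rewrite HI inE.
    by rewrite inE ltnn.
  have memR' : forall x y, (finfun (join x y) \in R') = Q (join x y).
    by move=> x y; rewrite inE /Q ffun_fun.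
  have := Hrect _ R' defR' n2 I I0 IT (finfun (join (enum_val i) (enum_val j)))
    (finfun (join (enum_val i') (enum_val j)))
    (finfun (join (enum_val i) (enum_val j)))
    (finfun (join (enum_val i) (enum_val j'))).
  rewrite !mix_join // !memR'.
  by apply.
- move=> Hbal n R [phi [ok Hdef]] n2 I I0 IT a b c d Hac Had Hbc.
  pose tau (t : 'I_n) : 'I_(n + n + 0) :=
    if t \in I then lshift 0 (lshift n t) else lshift 0 (rshift n t).
  have [phi' [ok' Hev]] := rename_mpp 2 tau ok.
  pose R2 := [set f : {ffun 'I_(n + n + 0) -> H} | mpp_eval 2 phi' f].
  have def2 : mpp_definable 2 S R2 by exists phi'; split => // f; rewrite inE.
  have Hb := Hbal _ R2 def2 n n 0%N (erefl _).
  have entry : forall x y, (balance_matrix 2 (erefl (n + n + 0)%N) R2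
      (enum_rank x) (enum_rank y) != 0) = (mix I x y \in R).
    move=> x y; rewrite mxE !enum_rankK.
    have Hc : forall z, (tri_tuple (erefl (n + n + 0)%N) x y z \in R2) = (mix I x y \in R).
      move=> z; rewrite inE Hev Hdef; congr (mpp_eval _ _ _).
      apply: functional_extensionality => t; rewrite /tri_tuple /mix !ffunE cast_ord_id /tau.
      by case: (t \in I); rewrite !join_l ?join_r.
    case: (boolP (mix I x y \in R)) => Hm.
      rewrite eq_cardT; last by move=> z; rewrite inE Hc Hm.
      by rewrite -cardE card_ffun card_ord expn0 oner_neq0.
    by rewrite eq_card0 ?eqxx // => z; rewrite inE Hc (negbTE Hm).
  have := rank1_rect Hb (i := enum_rank a) (i' := enum_rank b) (j := enum_rank c) (j' := enum_rank d).
  rewrite !entry; apply => //.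
Qed.
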